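(* In the Ewens setting, $W(1,0)=\theta$, and for every $N\ge2$: $$W(N,0)=(N-1)\,W(N-1,0),$$ $$W(N,k)=(N-1)\,W(N-1,k)+\frac{(N-2)!}{(k-1)!}\,\theta\,[k]_\theta\qquad\text{for }1\le k\le N-1,$$ where $W(N-1,N-1):=0$.
   Context: Permutations of $\{1,\dots,N\}$ are written in one-line notation; $\mathfrak S_N$ is the set of all of them. An entry $\pi_j$ is a left-to-right maximum if $\pi_j>\pi_i$ for all $i<j$; $\mathrm{lrm}(\pi)$ is the number of left-to-right maxima of $\pi$. Let $\theta>0$ (or $\theta$ an indeterminate). For $0\le k\le N-1$, a permutation $\pi\in\mathfrak S_N$ is $k$-winnable if the first index $j>k$ such that $\pi_j$ is a left-to-right maximum satisfies $\pi_j=N$. Equivalently, $\pi$ is won by the strategy that rejects the first $k$ candidates and accepts the next left-to-right maximum. Ewens setting: $W(N,k)=\sum_{k\text{-winnable }\pi\in\mathfrak S_N}\theta^{\mathrm{lrm}(\pi)}$, with $W(N,N):=0$, and $[m]_\theta=\theta(\theta+1)\cdots(\theta+m-1)$ with $[0]_\theta=1$. *)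

(* Defs.v *)
From HB Require Import structures.
From mathcomp Require Import all_boot all_order all_algebra all_fingroup.
Set Implicit Arguments. Unset Strict Implicit. Unset Printing Implicit Defensive.
Import GRing.Theory.
Local Open Scope ring_scope.

(* Permutations of {1,...,N} are modelled as 'S_N = {perm 'I_N}: the value
   v : 'I_N stands for v+1, and the 0-indexed position j : 'I_N stands for the
   paper's position j+1.  So pi_{j+1} (paper) = s j + 1. *)

Definition is_lrm (N : nat) (s : 'S_N) (j : 'I_N) : bool :=
  [forall i : 'I_N, (i < j)%N ==> (s i < s j)%N].

Definition lrm (N : nat) (s : 'S_N) : nat := #|[pred j : 'I_N | is_lrm s j]|.

(* k-winnable: the first (paper) index j > k, i.e. 0-indexed j >= k, that is a
   left-to-right maximum exists and carries the maximal value N (here N-1). *)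
Definition winnable (N k : nat) (s : 'S_N) : bool :=
  [exists j : 'I_N,
     [&& (k <= j)%N, is_lrm s j, (val (s j) == N.-1)%N &
         [forall i : 'I_N, ((k <= i)%N && (i < j)%N) ==> ~~ is_lrm s i]]].

(* W(N,k) = sum over k-winnable permutations of theta^lrm.
   For k >= N no permutation is k-winnable, so W(N,N) = 0 holds by definition. *)
Definition W (R : comRingType) (theta : R) (N k : nat) : R :=
  \sum_(s : 'S_N | winnable k s) theta ^+ lrm s.

Definition rising (R : comRingType) (theta : R) (m : nat) : R :=
  \prod_(i < m) (theta + i%:R).

(* Main.v *)
Require Import Defs.
From HB Require Import structures.
From mathcomp Require Import all_boot all_order all_algebra all_fingroup.
From mathcomp Require Import ring zify.
Set Implicit Arguments. Unset Strict Implicit. Unset Printing Implicit Defensive.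
Import GRing.Theory.
Local Open Scope ring_scope.

Section S.
Variables (R : comRingType) (theta : R).

Lemma sum_perm_lift n (F : 'S_n.+1 -> R) :
  \sum_(s : 'S_n.+1) F s = \sum_(v : 'I_n.+1) \sum_(s : 'S_n) F (lift_perm ord_max v s).
Proof.
rewrite (partition_big (fun s : 'S_n.+1 => s ord_max) predT) //=.
apply: eq_bigr => j0 _.
set i0 := (@ord_max n).
rewrite (reindex (lift_perm i0 j0)); last first.
  pose ulsf i (s : 'S_n.+1) k := odflt k (unlift (s i) (s (lift i k))).
  have ulsfK i (s : 'S_n.+1) k: lift (s i) (ulsf i s k) = s (lift i k).
    rewrite /ulsf; have:= neq_lift i k.
    by rewrite -(can_eq (permK s)) => /unlift_some[] ? ? ->.
  have inj_ulsf: injective (ulsf i0 _).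
    move=> s; apply: can_inj (ulsf (s i0) s^-1%g) _ => k'.
    by rewrite {1}/ulsf ulsfK !permK liftK.
  exists (fun s => perm (inj_ulsf s)) => [s _ | s].
    by apply/permP=> k'; rewrite permE /ulsf lift_perm_lift lift_perm_id liftK.
  move/(s _ =P _) => si0; apply/permP=> k.
  case: (unliftP i0 k) => [k'|] ->; rewrite ?lift_perm_id //.
  by rewrite lift_perm_lift -si0 permE ulsfK.
by apply: eq_bigl => s; rewrite lift_perm_id eqxx.
Qed.

Lemma forall_lift n (P : pred 'I_n.+1) :
  [forall i, P i] = P ord_max && [forall i : 'I_n, P (lift ord_max i)].
Proof.
apply/forallP/andP => [H | [H1 /forallP H2] i]; first by split => //; apply/forallP.
by case: (unliftP ord_max i) => [j|] ->.
Qed.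

Lemma exists_lift n (P : pred 'I_n.+1) :
  [exists i, P i] = P ord_max || [exists i : 'I_n, P (lift ord_max i)].
Proof.
apply/existsP/orP => [[i] | [H | /existsP [i H]]]; last by exists (lift ord_max i).
  by case: (unliftP ord_max i) => [j|] -> H; [right; apply/existsP; exists j | left].
by exists ord_max.
Qed.

Lemma ltn_lift n (v : 'I_n.+1) (a b : 'I_n) : (lift v a < lift v b)%N = (a < b)%N.
Proof. by rewrite /= !ltnNge leq_bump2. Qed.

Lemma bump_max n (i : 'I_n) : bump n i = i.
Proof. by rewrite /bump leqNgt ltn_ord. Qed.

Lemma lrm_lift_lift n (v : 'I_n.+1) (s : 'S_n) j :
  is_lrm (lift_perm ord_max v s) (lift ord_max j) = is_lrm s j.
Proof.
rewrite /is_lrm forall_lift lift_perm_lift !lift_max.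
have -> : (n < j)%N = false by rewrite ltnNge (ltnW (ltn_ord j)).
rewrite /=; apply/forallP/forallP => H i; have := H i;
  rewrite lift_perm_lift ltn_lift /= !bump_max //.
Qed.

Lemma lrm_lift_max n (v : 'I_n.+1) (s : 'S_n) :
  is_lrm (lift_perm ord_max v s) ord_max = (v == ord_max).
Proof.
rewrite /is_lrm forall_lift ltnn /= lift_perm_id.
apply/forallP/eqP => [H | ->].
  apply/val_inj => /=; apply/eqP; rewrite eqn_leq -ltnS ltn_ord /=.
  set u := ((lift_perm ord_max v s)^-1)%g ord_max.
  have Lu : lift_perm ord_max v s u = ord_max by rewrite permKV.
  case: (unliftP ord_max u) => [j Hj|Hu].
    have := H j; rewrite /= bump_max ltn_ord /= -Hj Lu /= => Hv.
    by move: (ltn_ord v); rewrite ltnS leqNgt Hv.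
  by move: Lu; rewrite Hu lift_perm_id => ->.
move=> i; rewrite /= bump_max ltn_ord /= lift_perm_lift /=.
by rewrite bump_max ltn_ord.
Qed.

Definition cond M k (s : 'S_M) := [forall i : 'I_M, (k <= i)%N ==> ~~ is_lrm s i].

Lemma cond_lift n (v : 'I_n.+1) (s : 'S_n) k :
  cond k (lift_perm ord_max v s) = ((k <= n)%N ==> (v != ord_max)) && cond k s.
Proof.
rewrite /cond forall_lift lrm_lift_max /=; congr (_ && _).
by apply/forallP/forallP => H i; have := H i; rewrite lrm_lift_lift bump_max.
Qed.

Lemma lrm_sum M (s : 'S_M) : lrm s = (\sum_(j : 'I_M) (is_lrm s j : nat))%N.
Proof.
rewrite /lrm -sum1_card big_mkcond /=; apply: eq_bigr => j _; rewrite inE; by case: is_lrm.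
Qed.

Lemma lrm_lift n (v : 'I_n.+1) (s : 'S_n) :
  lrm (lift_perm ord_max v s) = (lrm s + (v == ord_max))%N.
Proof.
rewrite !lrm_sum big_ord_recr /= lrm_lift_max; congr (_ + _)%N.
apply: eq_bigr => j _.
have -> : widen_ord (leqnSn n) j = lift ord_max j by apply: val_inj; rewrite /= bump_max.
by rewrite lrm_lift_lift.
Qed.

Lemma bump_eqn n (v : 'I_n.+1) (x : 'I_n) :
  v != ord_max -> (bump v x == n) = (x == n.-1 :> nat).
Proof.
move=> Hv; have Hvn : (v < n)%N.
  have H1 : (v : nat) != n by apply: contra Hv => /eqP H; apply/eqP/val_inj.
  by have := ltn_ord v; lia.
have Hx := ltn_ord x.
rewrite /bump; case: leqP => H; apply/eqP/eqP => /=; lia.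
Qed.

Lemma win_lift n (v : 'I_n.+1) (s : 'S_n) k :
  winnable k (lift_perm ord_max v s) =
  if v == ord_max then (k <= n)%N && cond k s else winnable k s.
Proof.
rewrite /winnable exists_lift lrm_lift_max lift_perm_id.
case: eqP => [-> | Hv].
  rewrite eqxx /= forall_lift ltnn andbF /=.
  rewrite [X in _ || X](_ : _ = false) ?orbF; last first.
    apply/existsP => -[j /and4P [_ _ H _]]; move: H.
    rewrite lift_perm_lift /= bump_max => /eqP H.
    by have := ltn_ord (s j); rewrite H ltnn.
  rewrite /cond; apply: andb_id2l => _; apply/forallP/forallP => H i; have := H i;
    by rewrite lrm_lift_lift bump_max ltn_ord andbT.
have Hv' : (v == ord_max) = false by apply/eqP.
rewrite andbF /=.
apply: eq_existsb => j.
rewrite lrm_lift_lift !bump_max lift_perm_lift /= (bump_eqn _ (negbT Hv')).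
do 3 apply: andb_id2l => _.
rewrite forall_lift /= ltnNge (ltnW (ltn_ord j)) andbF /=.
by apply/forallP/forallP => H i; have := H i; rewrite lrm_lift_lift !bump_max.
Qed.

Definition A M k := \sum_(s : 'S_M | cond k s) theta ^+ lrm s.

Lemma widen_neq n (v : 'I_n) : (widen_ord (leqnSn n) v == ord_max) = false.
Proof. by apply/eqP => /(congr1 val) /= H; move: (ltn_ord v); rewrite H ltnn. Qed.

Lemma W_rec n k : W theta n.+1 k =
  n%:R * W theta n k + (if (k <= n)%N then theta * A n k else 0).
Proof.
rewrite /W big_mkcond sum_perm_lift big_ord_recr /=.
congr (_ + _).
  transitivity (\sum_(i < n) \sum_(s : 'S_n | winnable k s) theta ^+ lrm s).
    2: by rewrite sumr_const card_ord mulr_natl.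
  apply: eq_bigr => v _; rewrite [RHS]big_mkcond; apply: eq_bigr => s _.
  by rewrite win_lift lrm_lift widen_neq addn0.
under eq_bigr => s _ do rewrite win_lift lrm_lift eqxx.
case: (k <= n)%N => /=; last by rewrite big1.
rewrite /A big_distrr /= [RHS]big_mkcond; apply: eq_bigr => s _.
by rewrite addn1 exprS; case: cond; rewrite ?mulr0.
Qed.

Lemma A_rec n k : A n.+1 k =
  (if (k <= n)%N then n%:R else theta + n%:R) * A n k.
Proof.
have E1 : \sum_(s : 'S_n) (if cond k s then theta ^+ lrm s else 0) = A n k.
  by rewrite /A [RHS]big_mkcond.
rewrite {1}/A big_mkcond sum_perm_lift big_ord_recr /=.
under eq_bigr => v _ do under eq_bigr => s _ do
  rewrite cond_lift lrm_lift widen_neq addn0 implybT /=.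
under [X in _ + X]eq_bigr => s _ do rewrite cond_lift lrm_lift eqxx addn1.
rewrite E1 sumr_const card_ord -[A n k *+ n]mulr_natl.
case: (k <= n)%N => /=.
  by rewrite big1 ?addr0.
rewrite mulrDl addrC; congr (_ + _).
by rewrite -E1 big_distrr /=; apply: eq_bigr => s _; case: cond; rewrite ?exprS ?mulr0.
Qed.

Lemma A_big M k : (M <= k)%N -> A M k = rising theta M.
Proof.
elim: M => [|M IH] H.
  rewrite /A /rising big_ord0.
  rewrite (eq_bigl predT); last first.
    by move=> s; rewrite /cond; apply/forallP => -[].
  rewrite (eq_bigr (fun _ => 1)); last first.
    by move=> s _; rewrite lrm_sum big_ord0.
  by rewrite sumr_const card_Sn.
rewrite A_rec leqNgt H /= IH ?(ltnW H) //.
by rewrite /rising big_ord_recr /= mulrC.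
Qed.

Lemma A_0 n : A n.+1 0 = 0.
Proof.
rewrite /A big_pred0 // => s; apply/negbTE; rewrite /cond; apply/forallP => /(_ ord0) /=.
by rewrite /is_lrm; apply/negP; rewrite negbK; apply/forallP => i; rewrite ltn0.
Qed.

Lemma A_formula d k :
  A (k.+1 + d) k.+1 = ((k + d)`! %/ k`!)%:R * rising theta k.+1.
Proof.
elim: d => [|d IH].
  by rewrite !addn0 A_big // divnn fact_gt0 mul1r.
rewrite addnS A_rec leq_addr IH mulrA -natrM.
congr (_%:R * _).
rewrite addnS factS muln_divA //.
by rewrite (fact_split (leq_addr d k)) dvdn_mulr.
Qed.

End S.

Unset Implicit Arguments.

Theorem theorem4p3 (R : comRingType) (theta : R) :
  W theta 1 0 = theta /\
  (forall N : nat, (2 <= N)%N ->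
     W theta N 0 = (N - 1)%:R * W theta (N - 1) 0 /\
     (forall k : nat, (1 <= k <= N - 1)%N ->
        W theta N k = (N - 1)%:R * W theta (N - 1) k
                      + ((N - 2)`! %/ (k - 1)`!)%:R * theta * rising theta k)).
Proof.
split.
  rewrite W_rec /= mul0r add0r A_big // /rising big_ord0 mulr1 //.
case=> [|[|n]] // _; rewrite subn1 /=; split.
  by rewrite W_rec /= A_0 mulr0 addr0.
case=> [|k] // /andP [_ Hk].
rewrite W_rec Hk.
have -> : (n.+2 - 2 = n)%N by rewrite subn2.
rewrite subn1 /=.
have [d Hd] : exists d, n.+1 = (k.+1 + d)%N by exists (n.+1 - k.+1)%N; rewrite subnKC.
rewrite Hd A_formula.
have -> : (k + d = n)%N by move: Hd; rewrite addSn => -[].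
by rewrite mulrCA mulrA.
Qed.
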